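(* Let $\mathfrak h\subseteq\Phi^+$ be a Hessenberg set, let $w,v\in W$ with $v$ a cover of $w$, $v=s_\alpha w$, and suppose $\alpha\in\Delta$ is a simple root. If $\alpha\in N^{\mathfrak h}_v$, then $N^{\mathfrak h}_v=\{\alpha\}\cup s_\alpha N^{\mathfrak h}_w$; if $\alpha\notin N^{\mathfrak h}_v$, then $N^{\mathfrak h}_v=s_\alpha N^{\mathfrak h}_w$.
   Context: $\Phi$ is a crystallographic root system in a real Euclidean space with base $\Delta$, positive roots $\Phi^+$, $\Phi^-=-\Phi^+$, Weyl group $W$ with length $\ell$, and $s_\alpha$ the reflection through $\alpha$. Write $\alpha\prec\beta$ if $\beta-\alpha$ is a sum of positive roots. A Hessenberg set is a subset $\mathfrak h\subseteq\Phi^+$ whose complement in $\Phi^+$ is upward closed for $\prec$. For $w\in W$, $N^{\mathfrak h}_w=\{\beta\in\Phi^+: w^{-1}\beta\in-\mathfrak h\}$. We say $v$ is a cover of $w$ if $v=s_\alpha w$ for some $\alpha\in\Phi^+$ with $v^{-1}\alpha\in\Phi^-$ and $\ell(v)=\ell(w)+1$. *)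

(* Defs.v *)
From HB Require Import structures.
From mathcomp Require Import all_boot all_order all_algebra.
From mathcomp Require Import boolp classical_sets reals.
Set Implicit Arguments. Unset Strict Implicit. Unset Printing Implicit Defensive.
Import Order.TTheory GRing.Theory Num.Theory.
Local Open Scope ring_scope.
Local Open Scope classical_set_scope.

(* The real Euclidean space is R^n (column vectors 'cV[R]_n) with the standard
   inner product; Weyl group elements are n x n matrices acting on the left. *)
Section RootSystems.
Variables (R : realType) (n : nat).
Implicit Types (x a b g : 'cV[R]_n) (Phi Delta : seq 'cV[R]_n).

Definition dotv (x y : 'cV[R]_n) : R := (x^T *m y) 0 0.

(* reflection s_a : x |-> x - 2 (x,a)/(a,a) a *)
Definition sref (a : 'cV[R]_n) : 'M[R]_n :=
  1%:M - (2 / dotv a a) *: (a *m a^T).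

Definition is_root_system Phi : Prop :=
  [/\ (0 \notin Phi),
      (forall x : 'cV[R]_n, exists c : 'cV[R]_n -> R, x = \sum_(a <- Phi) c a *: a),
      (forall a (c : R), a \in Phi -> c *: a \in Phi -> c = 1 \/ c = -1),
      (forall a b, a \in Phi -> b \in Phi -> sref a *m b \in Phi) &
      (forall a b, a \in Phi -> b \in Phi ->
         exists z : int, 2 * dotv b a / dotv a a = z%:~R)].

Definition is_base Phi Delta : Prop :=
  [/\ uniq Delta, {subset Delta <= Phi},
      (forall c : 'cV[R]_n -> R, \sum_(d <- Delta) c d *: d = 0 ->
         forall d, d \in Delta -> c d = 0) &
      (forall b, b \in Phi -> exists c : 'cV[R]_n -> int,
         b = \sum_(d <- Delta) (c d)%:~R *: d /\
         ((forall d, d \in Delta -> (0 <= c d)%R) \/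
          (forall d, d \in Delta -> (c d <= 0)%R)))].

Definition posr Phi Delta b : Prop :=
  b \in Phi /\ exists c : 'cV[R]_n -> int,
    b = \sum_(d <- Delta) (c d)%:~R *: d /\ (forall d, d \in Delta -> (0 <= c d)%R).

Definition negr Phi Delta b : Prop := posr Phi Delta (- b).

Definition precr Phi Delta a b : Prop :=
  exists s : seq 'cV[R]_n, (forall x, x \in s -> posr Phi Delta x) /\
    b - a = \sum_(x <- s) x.

Definition hessenberg Phi Delta (h : set 'cV[R]_n) : Prop :=
  (forall x, h x -> posr Phi Delta x) /\
  (forall b g, posr Phi Delta b -> posr Phi Delta g -> ~ h b ->
     precr Phi Delta b g -> ~ h g).

Definition prod_refl (s : seq 'cV[R]_n) : 'M[R]_n :=
  foldr (fun a m => sref a *m m) 1%:M s.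

Definition weyl Phi (w : 'M[R]_n) : Prop :=
  exists s : seq 'cV[R]_n, {subset s <= Phi} /\ w = prod_refl s.

Definition length_is Delta (w : 'M[R]_n) (k : nat) : Prop :=
  (exists s : seq 'cV[R]_n, {subset s <= Delta} /\ size s = k /\ w = prod_refl s) /\
  (forall s : seq 'cV[R]_n, {subset s <= Delta} -> w = prod_refl s -> (k <= size s)%N).

Definition is_cover Phi Delta (w v : 'M[R]_n) a : Prop :=
  [/\ posr Phi Delta a, v = sref a *m w, negr Phi Delta (invmx v *m a) &
      exists k, length_is Delta w k /\ length_is Delta v k.+1].

Definition Nh Phi Delta (h : set 'cV[R]_n) (w : 'M[R]_n) : set 'cV[R]_n :=
  [set b | posr Phi Delta b /\ h (- (invmx w *m b))].

End RootSystems.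

(* Main.v *)
Require Import Defs.
From HB Require Import structures.
From mathcomp Require Import all_boot all_order all_algebra.
From mathcomp Require Import boolp classical_sets reals.
Import Order.TTheory GRing.Theory Num.Theory.
Local Open Scope ring_scope.
Local Open Scope classical_set_scope.

Lemma pos_neg_disj (R : realType) (n : nat) (Phi Delta : seq 'cV[R]_n) b :
  is_root_system Phi -> is_base Phi Delta -> posr Phi Delta b ->
  posr Phi Delta (- b) -> False.
Proof.
move=> [P0 _ _ _ _] [_ _ li _] [bP [c [eb c0]]] [_ [c' [eb' c0']]].
have S : \sum_(d <- Delta) (c d + c' d)%:~R *: d = 0.
  under eq_bigr do rewrite intrD scalerDl.
  by rewrite big_split /= -eb -eb' subrr.
have Z : forall d, d \in Delta -> c d = 0.
  move=> d dD; have := li _ S d dD; move/eqP; rewrite intr_eq0 paddr_eq0 ?c0 ?c0' //.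
  by case/andP=> /eqP.
have b0 : b = 0 by rewrite eb big_seq big1 // => d dD; rewrite Z // scale0r.
by move: P0; rewrite -b0 bP.
Qed.

Lemma sum_delta (R : realType) (n : nat) (Delta : seq 'cV[R]_n) (a : 'cV[R]_n) (k : R) :
  uniq Delta -> a \in Delta ->
  \sum_(d <- Delta) (if d == a then k else 0) *: d = k *: a.
Proof.
move=> uq aD; rewrite (bigD1_seq a) //= eqxx big1 ?addr0 // => d /negbTE ->.
by rewrite scale0r.
Qed.

Lemma sref_vec (R : realType) (n : nat) (a x : 'cV[R]_n) :
  sref a *m x = x - (2 * dotv a x / dotv a a) *: a.
Proof.
rewrite /sref mulmxBl mul1mx -scalemxAl -mulmxA [a^T *m x]mx11_scalar mul_mx_scalar.
by rewrite scalerA /dotv mulrAC.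
Qed.

Lemma s_pos (R : realType) (n : nat) (Phi Delta : seq 'cV[R]_n) a b :
  is_root_system Phi -> is_base Phi Delta -> a \in Delta ->
  posr Phi Delta b -> b != a -> posr Phi Delta (sref a *m b).
Proof.
move=> [P0 _ red refl _] [uq sub li rep] aD [bP [c [eb c0]]] ba.
have aP := sub _ aD.
have sbP := refl a b aP bP.
have [e [ee sgn]] := rep _ sbP.
set k := 2 * dotv a b / dotv a a.
have sv : sref a *m b = b - k *: a by rewrite sref_vec.
have key : forall d, d \in Delta -> d != a -> e d = c d.
  move=> d dD da.
  pose f d := (e d)%:~R - ((c d)%:~R - (if d == a then k else 0)).
  have Hs : \sum_(d <- Delta) f d *: d = 0.
    rewrite /f; under eq_bigr do rewrite scalerBl scalerBl.
    rewrite sumrB sumrB sum_delta // -ee -eb -sv.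
    by rewrite subrr.
  have := li f Hs d dD; rewrite /f (negbTE da) subr0 => /eqP.
  by rewrite subr_eq0 => /eqP /intr_inj.
case: sgn => [pos|neg]; first by split=> //; exists e.
exfalso.
have cz : forall d, d \in Delta -> d != a -> c d = 0.
  move=> d dD da; apply/eqP; rewrite eq_le c0 // andbT -(key d dD da).
  exact: neg.
have eb2 : b = (c a)%:~R *: a.
  rewrite eb (bigD1_seq a) //= big1_seq ?addr0 // => d /andP [da dD].
  by rewrite cz // scale0r.
have := red a (c a)%:~R aP; rewrite -eb2 => /(_ bP) [c1|cm1].
  by move: ba; rewrite eb2 c1 scale1r eqxx.
have := c0 a aD; rewrite -(ler0z R) cm1.
by rewrite ler0N1.
Qed.
Lemma dotv_gt0 (R : realType) (n : nat) (a : 'cV[R]_n) : a != 0 -> dotv a a != 0.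
Proof.
move=> a0; apply: contra a0 => /eqP H; apply/eqP/matrixP => i j.
rewrite ord1 mxE /dotv mxE in H *.
have := @psumr_eq0P R _ predT (fun k => a^T 0 k * a k 0).
move=> /(_ _ H) P.
have : a^T 0 i * a i 0 = 0 by apply: P => // k _; rewrite mxE -expr2 sqr_ge0.
rewrite mxE => /eqP; rewrite mulf_eq0 orbb => /eqP -> //=.
Qed.


Lemma sref_sq (R : realType) (n : nat) (a : 'cV[R]_n) : a != 0 ->
  sref a *m sref a = 1%:M.
Proof.
move=> a0; have d0 := @dotv_gt0 _ _ a a0.
rewrite /sref mulmxBl mul1mx mulmxBr mulmx1 -!scalemxAl -!scalemxAr.
rewrite -mulmxA (mulmxA a^T) [a^T *m a]mx11_scalar -/(dotv a a).
rewrite mulmxA mul_mx_scalar -scalemxAl scalerA.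
set A := a *m a^T; set d := dotv a a.
rewrite divfK //; move: (2 / d) => c.
rewrite scalerA mulrC -scalerA scaler_nat mulr2n; set B := c *: A.
have -> : B - (B + B) = - B by rewrite opprD addrA subrr sub0r.
by rewrite opprK subrK.
Qed.

Arguments pos_neg_disj {R n Phi Delta b}.
Arguments s_pos {R n Phi Delta a b}.
Arguments sref_sq {R n a}.
Arguments dotv_gt0 {R n a}.
Arguments sref_vec {R n}.

Lemma weyl_unit (R : realType) (n : nat) (Phi : seq 'cV[R]_n) w :
  is_root_system Phi -> weyl Phi w -> w \in unitmx.
Proof.
move=> [P0 _ _ _ _] [s [sP ->]]; elim: s sP => [|b s IH] sP /=.
  exact: unitmx1.
rewrite unitmx_mul IH ?andbT; last by move=> x xs; apply: sP; rewrite inE xs orbT.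
have bP : b \in Phi by apply: sP; rewrite inE eqxx.
have b0 : b != 0 by apply: contraNneq P0 => <-.
by case: (mulmx1_unit (sref_sq b0)).
Qed.

Arguments weyl_unit {R n Phi w}.

Theorem corollary2p10 (R : realType) (n : nat)
  (Phi Delta : seq 'cV[R]_n) (h : set 'cV[R]_n) (w v : 'M[R]_n) (a : 'cV[R]_n) :
  is_root_system Phi -> is_base Phi Delta -> hessenberg Phi Delta h ->
  weyl Phi w -> weyl Phi v -> is_cover Phi Delta w v a -> a \in Delta ->
  (Nh Phi Delta h v a ->
     Nh Phi Delta h v = [set a] `|` (mulmx (sref a)) @` Nh Phi Delta h w) /\
  (~ Nh Phi Delta h v a ->
     Nh Phi Delta h v = (mulmx (sref a)) @` Nh Phi Delta h w).
Proof.
move=> rs base [hpos _] wW vW [aPos vdef vneg _] aD.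
have aP : a \in Phi by case: base => _ sub _ _; apply: sub.
have a0 : a != 0 by case: rs => P0 _ _ _ _; apply: contraNneq P0 => <-.
set S := sref a.
have SS : S *m S = 1%:M := sref_sq a0.
have SSx : forall x : 'cV[R]_n, S *m (S *m x) = x by move=> x; rewrite mulmxA SS mul1mx.
have wu := weyl_unit rs wW.
have vu := weyl_unit rs vW.
have invv : invmx v = invmx w *m S.
  have E : v *m (invmx w *m S) = 1%:M by rewrite vdef !mulmxA mulmxK // SS.
  by rewrite -[invmx v]mulmx1 -E mulmxA mulVmx // mul1mx.
have F1 : forall y : 'cV[R]_n, invmx v *m y = invmx w *m (S *m y) by move=> y; rewrite invv mulmxA.
have Sa : S *m a = - a.
  rewrite /S sref_vec mulfK ?dotv_gt0 // scaler_nat mulr2n opprD addrA subrr sub0r //.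
have Fwa : posr Phi Delta (invmx w *m a).
  by move: vneg; rewrite /negr F1 Sa mulmxN opprK.
have naNw : ~ Nh Phi Delta h w a.
  move=> [_ H]; have := hpos _ H; exact: pos_neg_disj rs base Fwa.
have H1 : forall x, Nh Phi Delta h v x -> x != a -> (mulmx S @` Nh Phi Delta h w) x.
  move=> x [xP hx] xa; exists (S *m x); last exact: SSx.
  split; first exact: s_pos rs base aD xP xa.
  by rewrite -F1.
have H2 : forall x, (mulmx S @` Nh Phi Delta h w) x -> Nh Phi Delta h v x.
  move=> x [y [yP hy] <-].
  have ya : y != a by apply/eqP => ya; apply: naNw; rewrite -ya.
  split; first exact: s_pos rs base aD yP ya.
  by rewrite F1 SSx.
split=> [Na | nNa]; apply/seteqP; split => x.
- move=> Nx; have [->|xa] := eqVneq x a; first by left.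
  by right; apply: H1.
- by case=> [->|]; [exact: Na | exact: H2].
- move=> Nx; apply: H1 => //; apply/eqP => xa; apply: nNa; rewrite -xa.
  exact: Nx.
- exact: H2.
Qed.
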